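(* Let $X$ be a Minkowski plane and $\mathbf{a}_1,\mathbf{a}_2,\mathbf{a}_3\in X\setminus\{\mathbf{o}\}$. The configuration $\{\mathbf{o}\mathbf{a}_1,\mathbf{o}\mathbf{a}_2,\mathbf{o}\mathbf{a}_3\}$ is a floating FT configuration if and only if it is not pointed and all angles $\sphericalangle\mathbf{a}_i\mathbf{o}\mathbf{a}_j$ ($i\neq j$) are critical.
   Context: A Minkowski plane is a two-dimensional real normed space $(X,\|\cdot\|)$. A Fermat-Torricelli (FT) point of finitely many points $\mathbf{x}_1,\dots,\mathbf{x}_n$ is a minimizer of $\mathbf{x}\mapsto\sum_i\|\mathbf{x}-\mathbf{x}_i\|$. A configuration $\{\mathbf{x}_0\mathbf{x}_i: i=1,\dots,n\}$ (segments from $\mathbf{x}_0$ with $\mathbf{x}_i\neq\mathbf{x}_0$) is a floating FT configuration if $\mathbf{x}_0$ is an FT point of $\{\mathbf{x}_1,\dots,\mathbf{x}_n\}$. It is pointed if there is a line $H$ through $\mathbf{x}_0$ such that the relative interiors of all segments $\mathbf{x}_0\mathbf{x}_i$ lie in the same open half-plane bounded by $H$. The angle $\sphericalangle\mathbf{x}_1\mathbf{x}_0\mathbf{x}_2$ is the convex cone bounded by the rays from $\mathbf{x}_0$ through $\mathbf{x}_1$ and through $\mathbf{x}_2$; it is critical if there exists a point $\mathbf{x}_3\neq\mathbf{x}_0$ such that $\mathbf{x}_0$ is an FT point of $\{\mathbf{x}_1,\mathbf{x}_2,\mathbf{x}_3\}$. *)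

(* Defs.v *)
(* a Minkowski plane is modelled as R^2 = 'rV[R]_2 (R : realType)
   equipped with an arbitrary norm N.  Every 2-dimensional real normed space is
   linearly isometric to such a (R^2, N). *)
From mathcomp Require Import all_boot all_order all_algebra.
From mathcomp Require Import reals.
Set Implicit Arguments. Unset Strict Implicit. Unset Printing Implicit Defensive.
Import Order.TTheory GRing.Theory Num.Theory.
Local Open Scope ring_scope.

Section Defs.
Variable R : realType.
Notation V := 'rV[R]_2.

(* N is a norm on R^2 (nonnegativity follows from these axioms). *)
Definition is_norm (N : V -> R) : Prop :=
  [/\ (forall x, N x = 0 -> x = 0),
      (forall (a : R) (x : V), N (a *: x) = `|a| * N x) &
      (forall x y, N (x + y) <= N x + N y)].

Definition FT_point (N : V -> R) (x0 : V) (s : seq V) : Prop :=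
  forall x : V, \sum_(y <- s) N (x0 - y) <= \sum_(y <- s) N (x - y).

Definition floating_FT_config (N : V -> R) (x0 : V) (s : seq V) : Prop :=
  (forall y, y \in s -> y != x0) /\ FT_point N x0 s.

Definition dotp (c x : V) : R := c 0 0 * x 0 0 + c 0 1 * x 0 1.

(* pointed: some line H = {x | c.(x - x0) = 0} through x0 (c <> 0) such that the
   relative interiors {x0 + t (xi - x0) : 0 < t < 1} of all segments lie in the
   same open half-plane bounded by H (w.l.o.g. {x | c.(x - x0) > 0}, replacing
   c by -c). *)
Definition pointed (x0 : V) (s : seq V) : Prop :=
  exists c : V, c != 0 /\
    forall y, y \in s -> forall t : R, 0 < t < 1 ->
      0 < dotp c ((x0 + t *: (y - x0)) - x0).

Definition critical (N : V -> R) (x1 x0 x2 : V) : Prop :=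
  exists x3 : V, x3 != x0 /\ FT_point N x0 [:: x1; x2; x3].

End Defs.

(* Main.v *)
Require Import Defs.
From mathcomp Require Import all_boot all_order all_algebra.
From mathcomp Require Import reals.
From mathcomp Require Import classical_sets boolp.
From mathcomp Require Import ring lra.
Import Order.TTheory GRing.Theory Num.Theory.
Local Open Scope ring_scope.
Local Open Scope classical_set_scope.

Section Basics.
Variable R : realType.
Variable N : 'rV[R]_2 -> R.
Hypothesis hN : is_norm N.
Notation V := 'rV[R]_2.

Lemma vec2P (u v : V) : u 0 0 = v 0 0 -> u 0 1 = v 0 1 -> u = v.
Proof.
move=> h0 h1; apply/rowP => i.
case: i => [[|[|//]]] Hi.
  by have -> : Ordinal Hi = 0 by apply/val_inj.
by have -> : Ordinal Hi = 1 by apply/val_inj.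
Qed.

Lemma N_def0 x : N x = 0 -> x = 0. Proof. by case: hN => h _ _; apply: h. Qed.
Lemma NZ (c : R) x : N (c *: x) = `|c| * N x. Proof. by case: hN => _ h _; apply: h. Qed.
Lemma NT x y : N (x + y) <= N x + N y. Proof. by case: hN => _ _ h; apply: h. Qed.
Lemma N0 : N 0 = 0.
Proof. by rewrite -(scale0r (0:V)) NZ normr0 mul0r. Qed.
Lemma NN x : N (- x) = N x.
Proof. by rewrite -scaleN1r NZ normrN normr1 mul1r. Qed.
Lemma Nge0 x : 0 <= N x.
Proof.
have := NT x (- x); rewrite subrr N0 NN => h.
have : 0 <= N x + N x by []. lra.
Qed.

Lemma NZp (c : R) x : 0 <= c -> N (c *: x) = c * N x.
Proof. by move=> hc; rewrite NZ ger0_norm. Qed.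

Lemma Npos x : x != 0 -> 0 < N x.
Proof.
move=> hx; rewrite lt_neqAle Nge0 andbT; apply/negP => /eqP h.
by move: hx; rewrite (@N_def0 x (esym h)) eqxx.
Qed.

Lemma Nconv (th : R) x y : 0 <= th <= 1 ->
  N ((1 - th) *: x + th *: y) <= (1 - th) * N x + th * N y.
Proof.
case/andP => h0 h1.
by apply: le_trans (NT _ _) _; rewrite !NZp // subr_ge0.
Qed.

Lemma Nsub x y : N x - N y <= N (x - y).
Proof. have := NT (x - y) y; rewrite subrK; lra. Qed.

Definition Qd (a w : V) (t : R) := (N (a + t *: w) - N a) / t.

Lemma Q_lb a w t : 0 < t -> - N w <= Qd a w t.
Proof.
move=> ht; rewrite /Qd ler_pdivlMr //.
have := Nsub a (- (t *: w)); rewrite opprK NN (NZp _ _ (ltW ht)); lra.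
Qed.

Lemma Q_ub a w t : 0 < t -> Qd a w t <= N w.
Proof.
move=> ht; rewrite /Qd ler_pdivrMr //.
have := NT a (t *: w); rewrite (NZp _ _ (ltW ht)); lra.
Qed.

Lemma Q_mono a w s t : 0 < s -> s <= t -> Qd a w s <= Qd a w t.
Proof.
move=> hs hst; have ht : 0 < t by apply: lt_le_trans hst.
have th01 : 0 <= s / t <= 1.
  by rewrite divr_ge0 ?(ltW hs) ?(ltW ht) //= ler_pdivrMr // mul1r.
have := @Nconv (s / t) a (a + t *: w) th01.
have -> : (1 - s / t) *: a + s / t *: (a + t *: w) = a + s *: w.
  rewrite scalerDr scalerA mulfVK ?gt_eqF // scalerBl scale1r.
  by rewrite addrA subrK.
move=> h.
rewrite /Qd ler_pdivrMr // mulrAC ler_pdivlMr //.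
have e : (N (a + t *: w) - N a) * s = t * ((1 - s / t) * N a + s / t * N (a + t *: w) - N a).
  field; rewrite gt_eqF //.
rewrite e mulrC ler_pM2l //; lra.
Qed.

Definition Dset a w : set R := [set q | exists2 t, 0 < t & q = Qd a w t].
Definition D a w := inf (Dset a w).

Lemma Dset_inf a w : has_inf (Dset a w).
Proof.
split; first by exists (Qd a w 1); exists 1.
by exists (- N w) => q [t ht ->]; apply: Q_lb.
Qed.

Lemma D_le_Q a w t : 0 < t -> D a w <= Qd a w t.
Proof. move=> ht; apply: (ge_inf (proj2 (Dset_inf a w))); by exists t. Qed.

Lemma D_ge a w d : (forall t, 0 < t -> d <= Qd a w t) -> d <= D a w.
Proof.
move=> h; apply: lb_le_inf; first by exists (Qd a w 1); exists 1.
by move=> q [t ht ->]; apply: h.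
Qed.

Lemma D_adh a w e : 0 < e ->
  exists2 t, 0 < t & forall s, 0 < s -> s <= t -> Qd a w s < D a w + e.
Proof.
move=> he; have [q [t ht ->] hq] := inf_adherent he (Dset_inf a w).
exists t => // s hs hst; apply: le_lt_trans hq; exact: Q_mono.
Qed.

Lemma D_bounds a w : - N w <= D a w /\ D a w <= N w.
Proof.
split; first by apply: D_ge => t ht; apply: Q_lb.
exact: le_trans (D_le_Q a w 1 ltr01) (Q_ub a w 1 ltr01).
Qed.

Lemma le_eps (u v : R) : (forall e, 0 < e -> u <= v + e) -> u <= v.
Proof.
move=> h; rewrite leNgt; apply/negP => huv.
have he : 0 < (u - v) / 2 by rewrite divr_gt0 // subr_gt0.
have := h _ he; lra.
Qed.


Lemma D_eq a w d : (forall t, 0 < t -> d <= Qd a w t) ->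
  (exists2 t, 0 < t & Qd a w t <= d) -> D a w = d.
Proof.
move=> h1 [t ht h2]; apply/eqP; rewrite eq_le; apply/andP; split.
  exact: le_trans (D_le_Q a w t ht) h2.
exact: D_ge.
Qed.

Lemma D_w0 a : D a 0 = 0.
Proof.
apply: D_eq; last by exists 1 => //; rewrite /Qd scaler0 addr0 subrr mul0r.
by move=> t ht; rewrite /Qd scaler0 addr0 subrr mul0r.
Qed.

Lemma D_scalew a w c : 0 <= c -> D a (c *: w) = c * D a w.
Proof.
move=> hc0; have [->|hc'] := eqVneq c 0; first by rewrite scale0r D_w0 mul0r.
have hc : 0 < c by rewrite lt_neqAle eq_sym hc' hc0.
have QE t : 0 < t -> Qd a (c *: w) t = c * Qd a w (c * t).
  move=> ht; rewrite /Qd scalerA [t * c]mulrC; field.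
  by rewrite gt_eqF // mulr_gt0.
apply/eqP; rewrite eq_le; apply/andP; split.
  rewrite -ler_pdivrMl //; apply: D_ge => t ht.
  have hct : 0 < t / c by rewrite divr_gt0.
  rewrite ler_pdivrMl //; apply: le_trans (D_le_Q _ _ _ hct) _.
  have e : c * (t / c) = t by field; rewrite gt_eqF.
  by rewrite QE // e.
apply: D_ge => t ht; rewrite QE // ler_pM2l //; apply: D_le_Q.
by rewrite mulr_gt0.
Qed.

Lemma D_scalea a w c : 0 < c -> D (c *: a) w = D a w.
Proof.
move=> hc.
have QE t : 0 < t -> Qd (c *: a) w t = Qd a w (t / c).
  move=> ht; rewrite /Qd.
  have -> : c *: a + t *: w = c *: (a + t / c *: w).
    by rewrite scalerDr scalerA mulrCA mulfV ?gt_eqF // mulr1.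
  have NZc x : N (c *: x) = c * N x by apply: NZp; apply: ltW.
  rewrite !NZc; field; by rewrite !gt_eqF.
apply/eqP; rewrite eq_le; apply/andP; split.
  apply: D_ge => t ht; have hct : 0 < t * c by rewrite mulr_gt0.
  apply: le_trans (D_le_Q _ _ _ hct) _.
  by rewrite QE // mulfK ?gt_eqF.
apply: D_ge => t ht; rewrite QE //; apply: D_le_Q; by rewrite divr_gt0.
Qed.

Lemma D_oppa a w : D (- a) w = D a (- w).
Proof.
have QE t : Qd (- a) w t = Qd a (- w) t.
  by rewrite /Qd NN -NN opprD scalerN opprK.
apply/eqP; rewrite eq_le; apply/andP; split.
  by apply: D_ge => t ht; rewrite -QE; apply: D_le_Q.
by apply: D_ge => t ht; rewrite QE; apply: D_le_Q.
Qed.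

Lemma D_self a : D a a = N a.
Proof.
have QE t : 0 < t -> Qd a a t = N a.
  move=> ht; rewrite /Qd -{1}(scale1r a) -scalerDl NZp; last by rewrite addr_ge0 // ltW.
  field; rewrite gt_eqF //.
apply: D_eq; first by move=> t ht; rewrite QE.
by exists 1 => //; rewrite QE.
Qed.

Lemma D_selfN a : D a (- a) = - N a.
Proof.
apply: D_eq; first by move=> t ht; rewrite -(NN a); apply: Q_lb.
by exists 1 => //; rewrite /Qd scale1r subrr N0 sub0r divr1.
Qed.

Lemma D_add a x y : D a (x + y) <= D a x + D a y.
Proof.
apply: le_eps => e he.
have he2 : 0 < e / 2 by rewrite divr_gt0.
have [tx htx hx] := D_adh a x _ he2.
have [ty hty hy] := D_adh a y _ he2.
pose t := Num.min tx ty.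
have ht : 0 < t by rewrite lt_min htx hty.
have ht2 : 0 < t / 2 by rewrite divr_gt0.
have h1 := hx t ht ltac:(by rewrite /t ge_min lexx).
have h2 := hy t ht ltac:(by rewrite /t ge_min lexx orbT).

have key : Qd a (x + y) (t / 2) <= Qd a x t + Qd a y t.
  rewrite /Qd.
  have -> : a + t / 2 *: (x + y) = (1 - 1/2) *: (a + t *: x) + 1/2 *: (a + t *: y).
    by apply: vec2P; rewrite !mxE; field.
  have hh : @Order.le _ R 0 (1/2) && (1/2 <= (1:R)) by apply/andP; split; lra.
  have := @Nconv (1/2) (a + t *: x) (a + t *: y) hh.
  move=> hc.
  have E : (N (a + t *: x) - N a) / t + (N (a + t *: y) - N a) / t =
           (((1 - 1/2) * N (a + t *: x) + 1/2 * N (a + t *: y)) - N a) / (t / 2).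
    field; rewrite gt_eqF //.
  rewrite E ler_pM2r ?invr_gt0 //; lra.
have := D_le_Q a (x + y) _ ht2.
move: h1 h2; rewrite /t; lra.
Qed.

Lemma D_along a g : D a (g *: a) = g * N a.
Proof.
have [hg|hg] := leP 0 g; first by rewrite D_scalew // D_self.
have -> : g *: a = (- g) *: (- a) by rewrite scaleNr scalerN opprK.
by rewrite D_scalew ?oppr_ge0 ?ltW // D_selfN mulrNN.
Qed.

Lemma D_addalong a x g : D a (x + g *: a) = D a x + g * N a.
Proof.
apply/eqP; rewrite eq_le; apply/andP; split.
  by rewrite -D_along; apply: D_add.
have := D_add a (x + g *: a) ((- g) *: a).
by rewrite D_along scaleNr addrK mulNr; lra.
Qed.

Lemma Dlin a c g d : 0 <= d -> D a (g *: a + d *: c) = g * N a + d * D a c.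
Proof. by move=> hd; rewrite addrC D_addalong D_scalew // addrC. Qed.


Lemma slope a w s t : 0 < s -> 0 < t -> Qd a w s <= Qd (a + s *: w) w t.
Proof.
move=> hs ht.
have hst : 0 < s + t by rewrite addr_gt0.
have th01 : @Order.le _ R 0 (s / (s + t)) && (s / (s + t) <= 1).
  by rewrite divr_ge0 ?(ltW hs) ?(ltW hst) //= ler_pdivrMr // mul1r lerDl (ltW ht).
have := @Nconv (s / (s + t)) a (a + (s + t) *: w) th01.
have -> : (1 - s / (s + t)) *: a + s / (s + t) *: (a + (s + t) *: w) = a + s *: w.
  by apply: vec2P; rewrite !mxE; field; rewrite gt_eqF.
rewrite /Qd.
have -> : a + s *: w + t *: w = a + (s + t) *: w by rewrite scalerDl addrA.
set A := N a; set B := N (a + s *: w); set C := N (a + (s + t) *: w).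
move=> h.
have h2 : (s + t) * B <= t * A + s * C.
  have e : (s + t) * ((1 - s / (s + t)) * A + s / (s + t) * C) = t * A + s * C.
    by field; rewrite gt_eqF.
  by rewrite -e ler_pM2l.
rewrite ler_pdivrMr // mulrAC ler_pdivlMr //.
nra.
Qed.

Lemma ML a w al be : 0 <= al -> 0 < be -> D a w <= D (al *: a + be *: w) w.
Proof.
move=> hal hbe; have [->|hal'] := eqVneq al 0.
  by rewrite scale0r add0r D_scalea // D_self; case: (D_bounds a w).
have hal2 : 0 < al by rewrite lt_neqAle eq_sym hal' hal.
have -> : al *: a + be *: w = al *: (a + (be / al) *: w).
  by rewrite scalerDr scalerA mulrCA mulfV ?gt_eqF // mulr1.
rewrite D_scalea //.
have hs : 0 < be / al by rewrite divr_gt0.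
apply: D_ge => t ht; apply: le_trans (D_le_Q a w _ hs) _.
exact: slope.
Qed.

Definition FT3 b1 b2 b3 := forall x : V,
  N b1 + N b2 + N b3 <= N (x - b1) + N (x - b2) + N (x - b3).
Definition SD b1 b2 b3 w := D b1 w + D b2 w + D b3 w.

Lemma FT3_SD b1 b2 b3 : FT3 b1 b2 b3 -> forall w, 0 <= SD b1 b2 b3 w.
Proof.
move=> hft w; apply: (@le_trans _ _ (SD b1 b2 b3 w + 0)); last by rewrite addr0.
have h0 : forall e, 0 < e -> 0 <= SD b1 b2 b3 w + e.
  move=> e he; have he3 : 0 < e / 3 by rewrite divr_gt0.
  have [t1 ht1 h1] := D_adh b1 w _ he3.
  have [t2 ht2 h2] := D_adh b2 w _ he3.
  have [t3 ht3 h3] := D_adh b3 w _ he3.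
  pose t := Num.min t1 (Num.min t2 t3).
  have ht : 0 < t by rewrite !lt_min ht1 ht2 ht3.
  have q1 := h1 t ht ltac:(by rewrite /t ge_min lexx).
  have q2 := h2 t ht ltac:(by rewrite /t !ge_min lexx orbT).
  have q3 := h3 t ht ltac:(by rewrite /t !ge_min lexx !orbT).
  have hx := hft (- (t *: w)).
  have E b : N (- (t *: w) - b) = N (b + t *: w).
    by rewrite -(NN (b + t *: w)) opprD addrC.
  rewrite !E in hx.
  have hq : 0 <= Qd b1 w t + Qd b2 w t + Qd b3 w t.
    rewrite /Qd -!mulrDl; apply: divr_ge0; [lra | exact: ltW].
  rewrite /SD; lra.
by apply: le_eps => e he; rewrite addr0; apply: h0.
Qed.

Lemma SD_FT3 b1 b2 b3 : (forall w, 0 <= SD b1 b2 b3 w) -> FT3 b1 b2 b3.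
Proof.
move=> h x; have := h (- x); rewrite /SD.
have E b : D b (- x) <= N (x - b) - N b.
  apply: le_trans (D_le_Q b (- x) 1 ltr01) _.
  have e : N (b + - x) = N (x - b) by rewrite -NN opprD opprK addrC.
  by rewrite /Qd scale1r divr1 e.
have := E b1; have := E b2; have := E b3; lra.
Qed.


Definition le1 b1 b2 := forall w, - N w <= D b1 w + D b2 w.
Definition ge1 b1 b2 := exists2 x, x != 0 & N x <= D b1 x + D b2 x.

Lemma le1C b1 b2 : le1 b1 b2 -> le1 b2 b1.
Proof. by move=> h w; rewrite addrC. Qed.
Lemma ge1C b1 b2 : ge1 b1 b2 -> ge1 b2 b1.
Proof. by case=> x hx h; exists x => //; rewrite addrC. Qed.

Lemma N_eq_opp x : N (- x) = N x. Proof. exact: NN. Qed.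

Lemma gordan3 (b1 b2 b3 : V) l1 l2 l3 : l3 != 0 ->
  l1 *: b1 + l2 *: b2 + l3 *: b3 = 0 ->
  b3 = (- (l1 / l3)) *: b1 + (- (l2 / l3)) *: b2.
Proof.
move=> hl3 /rowP G; have G0 := G 0; have G1 := G 1.
rewrite !mxE in G0 G1; apply: vec2P; rewrite !mxE.
  have e : l3 * b3 0 0 = - (l1 * b1 0 0 + l2 * b2 0 0) by lra.
  by rewrite -(mulKf hl3 (b3 0 0)) e; field.
have e : l3 * b3 0 1 = - (l1 * b1 0 1 + l2 * b2 0 1) by lra.
by rewrite -(mulKf hl3 (b3 0 1)) e; field.
Qed.

Lemma GB_main b1 b2 b3 l1 l2 l3 s t :
  0 < l1 -> 0 < l2 -> 0 < l3 -> l1 *: b1 + l2 *: b2 + l3 *: b3 = 0 ->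
  le1 b2 b3 -> 0 <= s -> 0 < t -> s * l2 <= t * l1 ->
  N (s *: b1 + t *: b2) <= D b1 (s *: b1 + t *: b2) + D b2 (s *: b1 + t *: b2) ->
  N b3 <= D b1 (- b3) + D b2 (- b3).
Proof.
move=> hl1 hl2 hl3 G hle hs ht hst hx.
have hb3 := @gordan3 _ _ _ _ _ _ (lt0r_neq0 hl3) G.
have L1 : D b1 (s *: b1 + t *: b2) = s * N b1 + t * D b1 b2 by rewrite Dlin // ltW.
have L2 : D b2 (s *: b1 + t *: b2) = t * N b2 + s * D b2 b1.
  by rewrite addrC Dlin.
have mb3 : - b3 = (l1 / l3) *: b1 + (l2 / l3) *: b2.
  by rewrite hb3 opprD -!scaleNr !opprK.
have L3 : D b1 (- b3) = l1 / l3 * N b1 + l2 / l3 * D b1 b2.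
  by rewrite mb3 Dlin // divr_ge0 // ltW.
have L4 : D b2 (- b3) = l2 / l3 * N b2 + l1 / l3 * D b2 b1.
  by rewrite mb3 addrC Dlin // divr_ge0 // ltW.
have F1 : - N b1 <= D b2 b1 + D b3 b1 := hle b1.
pose la := (l1 * t - l2 * s) / (l3 * t).
pose mu := l2 / (l3 * t).
have hla : 0 <= la by rewrite /la divr_ge0 ?subr_ge0 ?mulr_ge0 ?(ltW hl3) ?(ltW ht) //; lra.
have hmu : 0 < mu by rewrite /mu divr_gt0 // mulr_gt0.
have Emu : mu *: (s *: b1 + t *: b2) = - (1 *: b3 + la *: b1).
  rewrite hb3; apply: vec2P; rewrite !mxE /mu /la; field; by rewrite !gt_eqF.
have F2 : N b3 + la * D b3 b1 <= mu * N (s *: b1 + t *: b2).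
  rewrite -NZp ?(ltW hmu) // Emu NN.
  case: (D_bounds b3 (1 *: b3 + la *: b1)) => _.
  by rewrite Dlin // mul1r.
rewrite L3 L4.
rewrite L1 L2 in hx.
move: F2; rewrite /mu /la => F2.
set Nx := N (s *: b1 + t *: b2) in hx F2.
set P := D b2 b1 in F1 L4 hx *; set Q := D b1 b2 in hx L3 *.
set D3 := D b3 b1 in F1 F2.
have e1 : l2 / (l3 * t) * Nx = (l2 * Nx) / (l3 * t) by rewrite mulrAC.
have e2 : (l1 * t - l2 * s) / (l3 * t) * D3 = ((l1 * t - l2 * s) * D3) / (l3 * t) by rewrite mulrAC.
rewrite e1 e2 in F2.
have hlt : 0 < l3 * t by rewrite mulr_gt0.
have F2' : (N b3 * (l3 * t) + (l1 * t - l2 * s) * D3) <= l2 * Nx.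
  move: F2; rewrite -(ler_pM2r hlt) mulrDl !mulfVK ?gt_eqF //.
have goalE : l1 / l3 * N b1 + l2 / l3 * Q + (l2 / l3 * N b2 + l1 / l3 * P) =
   (l1 * (N b1 + P) + l2 * (N b2 + Q)) / l3 by field; rewrite gt_eqF.
rewrite goalE ler_pdivlMr //.
have k1 : 0 <= l1 * t - l2 * s by lra.
have k2 : 0 <= (l1 * t - l2 * s) * (N b1 + P + D3) by apply: mulr_ge0 => //; lra.
have k3 : l2 * Nx <= l2 * (s * N b1 + t * N b2 + s * P + t * Q).
  by rewrite ler_pM2l //; lra.
rewrite -(ler_pM2r ht).
nra.
Qed.


Definition det2 (u v : V) := u 0 0 * v 0 1 - u 0 1 * v 0 0.

Lemma coord2 b1 b2 x : det2 b1 b2 != 0 ->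
  x = (det2 x b2 / det2 b1 b2) *: b1 + (det2 b1 x / det2 b1 b2) *: b2.
Proof.
move=> hd; move: (hd); rewrite /det2 => hd'.
by apply: vec2P; rewrite !mxE; field.
Qed.

Arguments GB_main {b1 b2 b3 l1 l2 l3 s t}.

Lemma GB_nn b1 b2 b3 l1 l2 l3 s t :
  0 < l1 -> 0 < l2 -> 0 < l3 -> l1 *: b1 + l2 *: b2 + l3 *: b3 = 0 ->
  le1 b1 b3 -> le1 b2 b3 -> 0 <= s -> 0 <= t -> s *: b1 + t *: b2 != 0 ->
  N (s *: b1 + t *: b2) <= D b1 (s *: b1 + t *: b2) + D b2 (s *: b1 + t *: b2) ->
  N b3 <= D b1 (- b3) + D b2 (- b3).
Proof.
move=> hl1 hl2 hl3 G h13 h23 hs ht hx0 hx.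
have [hst|hst] := leP (s * l2) (t * l1).
  have [t0|tpos] := eqVneq t 0.
    move: hst; rewrite t0 mul0r => hst.
    have s0 : s = 0 by nra.
    by move: hx0; rewrite s0 t0 !scale0r addr0 eqxx.
  have htp : 0 < t by rewrite lt_neqAle eq_sym tpos ht.
  exact: (GB_main hl1 hl2 hl3 G h23 hs htp hst hx).
have hsp : 0 < s.
  rewrite lt_neqAle hs andbT eq_sym; apply/negP => /eqP s0.
  by move: hst; rewrite s0 mul0r; apply/negP; rewrite -leNgt mulr_ge0 // ltW.
rewrite addrC.
have G' : l2 *: b2 + l1 *: b1 + l3 *: b3 = 0 by rewrite [l2 *: b2 + _]addrC.
apply: (GB_main hl2 hl1 hl3 G' h13 ht hsp (ltW hst)).
by rewrite [t *: b2 + _]addrC [D b2 _ + _]addrC.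
Qed.

Arguments GB_nn {b1 b2 b3 l1 l2 l3} s t.

Lemma GB b1 b2 b3 l1 l2 l3 :
  0 < l1 -> 0 < l2 -> 0 < l3 -> l1 *: b1 + l2 *: b2 + l3 *: b3 = 0 ->
  det2 b1 b2 != 0 -> b1 != 0 -> b2 != 0 ->
  le1 b1 b3 -> le1 b2 b3 -> ge1 b1 b2 ->
  N b3 <= D b1 (- b3) + D b2 (- b3).
Proof.
move=> hl1 hl2 hl3 G hd hb1 hb2 h13 h23 [x hx0 hx].
move: hx0 hx; rewrite (coord2 b1 b2 x hd).
set s := det2 x b2 / det2 b1 b2; set t := det2 b1 x / det2 b1 b2.
clearbody s t => hx0 hx.
have Nb1 := Npos _ hb1; have Nb2 := Npos _ hb2.
have nn s' t' := @GB_nn b1 b2 b3 l1 l2 l3 s' t' hl1 hl2 hl3 G h13 h23.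
have [hs|hs] := leP 0 s; have [ht|ht] := leP 0 t.
- exact: nn hs ht hx0 hx.
-
  have hD : 0 <= D b2 b1.
    have E2 : D b2 (s *: b1 + t *: b2) = t * N b2 + s * D b2 b1 by rewrite addrC Dlin.
    have B1 := (D_bounds b1 (s *: b1 + t *: b2)).2.
    rewrite E2 in hx.
    have [s0|sp] := eqVneq s 0.
      exfalso; move: hx; rewrite s0 mul0r addr0 scale0r add0r NZ ltr0_norm //.
      rewrite s0 scale0r add0r in B1; move: B1; rewrite NZ ltr0_norm //.
      nra.
    have hsp : 0 < s by rewrite lt_neqAle eq_sym sp hs.
    have : 0 <= t * N b2 + s * D b2 b1 by lra.
    nra.
  apply: (nn 1 0) => //; first by rewrite scale1r scale0r addr0.
  by rewrite scale1r scale0r addr0 D_self; lra.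
-
  have hD : 0 <= D b1 b2.
    have E1 : D b1 (s *: b1 + t *: b2) = s * N b1 + t * D b1 b2 by rewrite Dlin.
    have B2 := (D_bounds b2 (s *: b1 + t *: b2)).2.
    rewrite E1 in hx.
    have [t0|tp] := eqVneq t 0.
      exfalso; move: hx B2; rewrite t0 mul0r addr0 scale0r addr0 NZ ltr0_norm //.
      nra.
    have htp : 0 < t by rewrite lt_neqAle eq_sym tp ht.
    have : 0 <= s * N b1 + t * D b1 b2 by lra.
    nra.
  apply: (nn 0 1) => //; first by rewrite scale1r scale0r add0r.
  by rewrite scale1r scale0r add0r D_self; lra.
- (* s < 0, t < 0 : compare with - x *)
  set y := s *: b1 + t *: b2 in hx0 hx.
  have hmy : - y = (- s) *: b1 + (- t) *: b2 by rewrite /y opprD -!scaleNr.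
  have st : 0 <= s / t by rewrite mulr_le0 ?invr_le0 // ltW.
  have ts : 0 <= t / s by rewrite mulr_le0 ?invr_le0 // ltW.
  have it : 0 < - 1 / t by rewrite mulN1r oppr_gt0 invr_lt0.
  have is1 : 0 < - 1 / s by rewrite mulN1r oppr_gt0 invr_lt0.
  have c1 : D b1 y <= D b2 (- y).
    have := ML b1 y (s / t) (- 1 / t) st it.
    have -> : s / t *: b1 + - 1 / t *: y = - b2.
      rewrite /y; apply: vec2P; rewrite !mxE; field; by rewrite ltr0_neq0.
    by rewrite D_oppa.
  have c2 : D b2 y <= D b1 (- y).
    have := ML b2 y (t / s) (- 1 / s) ts is1.
    have -> : t / s *: b2 + - 1 / s *: y = - b1.
      rewrite /y; apply: vec2P; rewrite !mxE; field; by rewrite ltr0_neq0.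
    by rewrite D_oppa.
  apply: (nn (- s) (- t)).
  - by rewrite oppr_ge0 ltW.
  - by rewrite oppr_ge0 ltW.
  - by rewrite -hmy oppr_eq0.
  rewrite -hmy NN; lra.
Qed.


Arguments GB {b1 b2 b3 l1 l2 l3}.

Lemma SD_cone b1 b2 b3 l1 l2 l3 al be :
  0 < l1 -> 0 < l2 -> 0 < l3 -> l1 *: b1 + l2 *: b2 + l3 *: b3 = 0 ->
  0 <= al -> 0 <= be ->
  0 <= SD b1 b2 b3 b1 -> 0 <= SD b1 b2 b3 (- b3) ->
  0 <= SD b1 b2 b3 (al *: b1 + be *: (- b3)).
Proof.
move=> hl1 hl2 hl3 G hal hbe S1 S3.
have hb3 := @gordan3 _ _ _ _ _ _ (lt0r_neq0 hl3) G.
have nz1 : l1 != 0 by rewrite gt_eqF.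
have nz3 : l3 != 0 by rewrite gt_eqF.
set w := al *: b1 + be *: (- b3).
have e1 : w = (al + be * (l1 / l3)) *: b1 + (be * (l2 / l3)) *: b2.
  rewrite /w hb3; apply: vec2P; rewrite !mxE; field; by rewrite ?nz1 ?nz3.
have e1' : - b3 = (l1 / l3) *: b1 + (l2 / l3) *: b2.
  rewrite hb3; apply: vec2P; rewrite !mxE; field; by rewrite ?nz1 ?nz3.
have e2 : w = (- (al * (l2 / l1))) *: b2 + (al * (l3 / l1) + be) *: (- b3).
  rewrite /w hb3; apply: vec2P; rewrite !mxE; field; by rewrite ?nz1 ?nz3.
have e2' : b1 = (- (l2 / l1)) *: b2 + (l3 / l1) *: (- b3).
  rewrite hb3; apply: vec2P; rewrite !mxE; field; by rewrite ?nz1 ?nz3.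
have e3 : w = (- (be + al * (l3 / l1))) *: b3 + (al * (l2 / l1)) *: (- b2).
  rewrite /w hb3; apply: vec2P; rewrite !mxE; field; by rewrite ?nz1 ?nz3.
have e3' : b1 = (- (l3 / l1)) *: b3 + (l2 / l1) *: (- b2).
  rewrite hb3; apply: vec2P; rewrite !mxE; field; by rewrite ?nz1 ?nz3.
have p1 : 0 <= l1 / l3 by rewrite divr_ge0 // ltW.
have p2 : 0 <= l2 / l3 by rewrite divr_ge0 // ltW.
have p3 : 0 <= l3 / l1 by rewrite divr_ge0 // ltW.
have p4 : 0 <= l2 / l1 by rewrite divr_ge0 // ltW.
have W1 : D b1 w = (al + be * (l1 / l3)) * N b1 + (be * (l2 / l3)) * D b1 b2.
  by rewrite e1 Dlin // mulr_ge0.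
have W2 : D b2 w = (- (al * (l2 / l1))) * N b2 + (al * (l3 / l1) + be) * D b2 (- b3).
  by rewrite {1}e2 Dlin // addr_ge0 // mulr_ge0.
have W3 : D b3 w = (- (be + al * (l3 / l1))) * N b3 + (al * (l2 / l1)) * D b3 (- b2).
  by rewrite {1}e3 Dlin // mulr_ge0.
have B11 : D b1 b1 = N b1 by rewrite D_self.
have B21 : D b2 b1 = (- (l2 / l1)) * N b2 + (l3 / l1) * D b2 (- b3).
  by rewrite {1}e2' Dlin.
have B31 : D b3 b1 = (- (l3 / l1)) * N b3 + (l2 / l1) * D b3 (- b2).
  by rewrite {1}e3' Dlin.
have B13 : D b1 (- b3) = (l1 / l3) * N b1 + (l2 / l3) * D b1 b2.
  by rewrite e1' Dlin.
have B33 : D b3 (- b3) = - N b3 by rewrite D_selfN.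
have E : SD b1 b2 b3 w = al * SD b1 b2 b3 b1 + be * SD b1 b2 b3 (- b3).
  rewrite /SD W1 W2 W3 B11 B21 B31 B13 B33; field; by rewrite ?nz1 ?nz3.
by rewrite E addr_ge0 // mulr_ge0.
Qed.


Arguments SD_cone {b1 b2 b3 l1 l2 l3 al be}.

Lemma SD_swap12 b1 b2 b3 w : SD b1 b2 b3 w = SD b2 b1 b3 w.
Proof. by rewrite /SD; ring. Qed.
Lemma SD_rot b1 b2 b3 w : SD b1 b2 b3 w = SD b2 b3 b1 w.
Proof. by rewrite /SD; ring. Qed.

Lemma SD_self b1 b2 b3 : le1 b2 b3 -> 0 <= SD b1 b2 b3 b1.
Proof. move=> h; have := h b1; rewrite /SD D_self; lra. Qed.

Lemma SD_selfN b1 b2 b3 : N b3 <= D b1 (- b3) + D b2 (- b3) -> 0 <= SD b1 b2 b3 (- b3).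
Proof. by rewrite /SD D_selfN; lra. Qed.

Lemma det2C u v : det2 u v = - det2 v u.
Proof. by rewrite /det2; ring. Qed.

Lemma add3_rot (x y z : V) : x + y + z = y + z + x.
Proof. by rewrite -addrA addrC. Qed.
Lemma add3_swap (x y z : V) : x + y + z = y + x + z.
Proof. by rewrite [x + y]addrC. Qed.

Lemma caseB a1 a2 a3 l1 l2 l3 :
  0 < l1 -> 0 < l2 -> 0 < l3 -> l1 *: a1 + l2 *: a2 + l3 *: a3 = 0 ->
  det2 a1 a2 != 0 -> det2 a2 a3 != 0 -> det2 a1 a3 != 0 ->
  a1 != 0 -> a2 != 0 -> a3 != 0 ->
  le1 a1 a2 -> le1 a1 a3 -> le1 a2 a3 ->
  ge1 a1 a2 -> ge1 a1 a3 -> ge1 a2 a3 ->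
  forall w, 0 <= SD a1 a2 a3 w.
Proof.
move=> hl1 hl2 hl3 G d12 d23 d13 n1 n2 n3 e12 e13 e23 g12 g13 g23.
have G213 : l2 *: a2 + l1 *: a1 + l3 *: a3 = 0 by rewrite -G [RHS]add3_swap.
have G231 : l2 *: a2 + l3 *: a3 + l1 *: a1 = 0 by rewrite -G [RHS]add3_rot.
have G132 : l1 *: a1 + l3 *: a3 + l2 *: a2 = 0.
  by rewrite -G [RHS]add3_rot [RHS]add3_rot [RHS]add3_swap.
have G321 : l3 *: a3 + l2 *: a2 + l1 *: a1 = 0 by rewrite -G [RHS]add3_rot [RHS]add3_swap.
have G312 : l3 *: a3 + l1 *: a1 + l2 *: a2 = 0 by rewrite -G [RHS]add3_rot [RHS]add3_rot.
have S1 : 0 <= SD a1 a2 a3 a1 by apply: SD_self.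
have S2 : 0 <= SD a1 a2 a3 a2 by rewrite SD_swap12; apply: SD_self.
have S3 : 0 <= SD a1 a2 a3 a3 by rewrite SD_rot SD_rot; apply: SD_self.
have d21 : det2 a2 a1 != 0 by rewrite det2C oppr_eq0.
have d31 : det2 a3 a1 != 0 by rewrite det2C oppr_eq0.
have d32 : det2 a3 a2 != 0 by rewrite det2C oppr_eq0.
have M3 : 0 <= SD a1 a2 a3 (- a3).
  by apply: SD_selfN; apply: (GB hl1 hl2 hl3 G).
have M1 : 0 <= SD a1 a2 a3 (- a1).
  rewrite SD_rot; apply: SD_selfN; apply: (GB hl2 hl3 hl1 G231) => //; exact: le1C.
have M2 : 0 <= SD a1 a2 a3 (- a2).
  rewrite SD_rot SD_rot; apply: SD_selfN; apply: (GB hl3 hl1 hl2 G312) => //.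
    exact: le1C.
  exact: ge1C.
have hb3 := @gordan3 _ _ _ _ _ _ (lt0r_neq0 hl3) G.
have z1 : l1 != 0 by rewrite gt_eqF.
have z2 : l2 != 0 by rewrite gt_eqF.
have z3 : l3 != 0 by rewrite gt_eqF.
move=> w; rewrite (coord2 a1 a2 w d12).
set s := det2 w a2 / det2 a1 a2; set t := det2 a1 w / det2 a1 a2.
clearbody s t.
have [hs|hs] := leP 0 s; have [ht|ht] := leP 0 t.
- have [hst|hst] := leP (t * l1) (s * l2).
  + have -> : s *: a1 + t *: a2 = (s - t * l1 / l2) *: a1 + (t * l3 / l2) *: (- a3).
      rewrite hb3; apply: vec2P; rewrite !mxE; field; by rewrite ?z1 ?z2 ?z3.
    apply: (SD_cone hl1 hl2 hl3 G) => //.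
    * have -> : s - t * l1 / l2 = (s * l2 - t * l1) / l2 by field.
      by rewrite divr_ge0 ?subr_ge0 // ltW.
    * by rewrite divr_ge0 ?mulr_ge0 // ltW.
  + have -> : s *: a1 + t *: a2 = (t - s * l2 / l1) *: a2 + (s * l3 / l1) *: (- a3).
      rewrite hb3; apply: vec2P; rewrite !mxE; field; by rewrite ?z1 ?z2 ?z3.
    rewrite SD_swap12; apply: (SD_cone hl2 hl1 hl3 G213) => //.
    * have -> : t - s * l2 / l1 = (t * l1 - s * l2) / l1 by field.
      by rewrite divr_ge0 ?subr_ge0 ?(ltW hst) // ltW.
    * by rewrite divr_ge0 ?mulr_ge0 // ltW.
    * by rewrite -SD_swap12.
    * by rewrite -SD_swap12.
- have -> : s *: a1 + t *: a2 = s *: a1 + (- t) *: (- a2).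
    by rewrite scaleNr scalerN opprK.
  have -> : forall x, SD a1 a2 a3 x = SD a1 a3 a2 x by move=> x; rewrite /SD; ring.
  apply: (SD_cone hl1 hl3 hl2 G132) => //.
  + by rewrite oppr_ge0 ltW.
  + by move: S1; rewrite /SD; lra.
  + by move: M2; rewrite /SD; lra.
- have -> : s *: a1 + t *: a2 = t *: a2 + (- s) *: (- a1).
    by rewrite scaleNr scalerN opprK addrC.
  have -> : forall x, SD a1 a2 a3 x = SD a2 a3 a1 x by move=> x; rewrite /SD; ring.
  apply: (SD_cone hl2 hl3 hl1 G231) => //.
  + by rewrite oppr_ge0 ltW.
  + by move: S2; rewrite /SD; lra.
  + by move: M1; rewrite /SD; lra.
- have [hst|hst] := leP (t * l1) (s * l2).
  + have -> : s *: a1 + t *: a2 = (- s * l3 / l1) *: a3 + (s * l2 / l1 - t) *: (- a2).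
      rewrite hb3; apply: vec2P; rewrite !mxE; field; by rewrite ?z1 ?z2 ?z3.
    have -> : forall x, SD a1 a2 a3 x = SD a3 a1 a2 x by move=> x; rewrite /SD; ring.
    apply: (SD_cone hl3 hl1 hl2 G312) => //.
    * by rewrite divr_ge0 ?mulr_ge0 ?oppr_ge0 ?(ltW hs) // ltW.
    * have -> : s * l2 / l1 - t = (s * l2 - t * l1) / l1 by field.
      by rewrite divr_ge0 ?subr_ge0 // ltW.
    * by move: S3; rewrite /SD; lra.
    * by move: M2; rewrite /SD; lra.
  + have -> : s *: a1 + t *: a2 = (- t * l3 / l2) *: a3 + (t * l1 / l2 - s) *: (- a1).
      rewrite hb3; apply: vec2P; rewrite !mxE; field; by rewrite ?z1 ?z2 ?z3.
    have -> : forall x, SD a1 a2 a3 x = SD a3 a2 a1 x by move=> x; rewrite /SD; ring.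
    apply: (SD_cone hl3 hl2 hl1 G321) => //.
    * by rewrite divr_ge0 ?mulr_ge0 ?oppr_ge0 ?(ltW ht) // ltW.
    * have -> : t * l1 / l2 - s = (t * l1 - s * l2) / l2 by field.
      by rewrite divr_ge0 ?subr_ge0 ?(ltW hst) // ltW.
    * by move: S3; rewrite /SD; lra.
    * by move: M1; rewrite /SD; lra.
Qed.


Lemma D3low a1 a3 s t : 0 <= D a3 a1 -> 0 <= D a3 (- a1) ->
  t * N a3 <= D a3 (t *: a3 + s *: a1).
Proof.
move=> P1 P2; have [hs|hs] := leP 0 s.
  by rewrite Dlin //; have := mulr_ge0 hs P1; lra.
have -> : t *: a3 + s *: a1 = t *: a3 + (- s) *: (- a1) by rewrite scaleNr scalerN opprK.
have hs' : 0 <= - s by rewrite oppr_ge0 ltW.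
rewrite Dlin //; have := mulr_ge0 hs' P2; lra.
Qed.

Lemma caseA a1 a2 a3 c : c < 0 -> a2 = c *: a1 ->
  det2 a1 a3 != 0 -> a1 != 0 -> a3 != 0 ->
  le1 a1 a3 -> le1 a2 a3 -> ge1 a1 a2 ->
  forall w, 0 <= SD a1 a2 a3 w.
Proof.
move=> hc ha2 d13 n1 n3 e13 e23 [x hx0 hx].
have Da2 w : D a2 w = D a1 (- w).
  have -> : a2 = (- c) *: (- a1) by rewrite ha2 scaleNr scalerN opprK.
  by rewrite D_scalea ?oppr_gt0 // D_oppa.
have P1 : 0 <= D a3 a1.
  have := e23 a1; rewrite Da2 D_selfN; lra.
have P2 : 0 <= D a3 (- a1).
  have := e13 (- a1); rewrite D_selfN NN; lra.
have Qx y s t : y = s *: a1 + t *: a3 ->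
   D a1 y + D a1 (- y) = `|t| * (D a1 a3 + D a1 (- a3)).
  move=> ->; have [ht|ht] := leP 0 t.
    have -> : - (s *: a1 + t *: a3) = (- s) *: a1 + t *: (- a3).
      by rewrite opprD -scaleNr scalerN.
    rewrite !Dlin // ger0_norm //; ring.
  have -> : - (s *: a1 + t *: a3) = (- s) *: a1 + (- t) *: a3.
    by rewrite opprD -!scaleNr.
  have -> : s *: a1 + t *: a3 = s *: a1 + (- t) *: (- a3).
    by rewrite scaleNr scalerN opprK.
  rewrite !Dlin ?oppr_ge0 ?(ltW ht) // ltr0_norm //; ring.
have Nx y s t : y = s *: a1 + t *: a3 -> `|t| * N a3 <= N y.
  move=> ->; have [ht|ht] := leP 0 t.
    rewrite ger0_norm //; apply: le_trans (D3low a1 a3 s t P1 P2) _.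
    by rewrite addrC; case: (D_bounds a3 (s *: a1 + t *: a3)).
  rewrite ltr0_norm // -(NN (s *: a1 + t *: a3)).
  have -> : - (s *: a1 + t *: a3) = (- t) *: a3 + (- s) *: a1 by rewrite opprD -!scaleNr addrC.
  apply: le_trans (D3low a1 a3 (- s) (- t) P1 P2) _.
  by case: (D_bounds a3 ((- t) *: a3 + (- s) *: a1)).
have Q3 : N a3 <= D a1 a3 + D a1 (- a3).
  move: hx0 hx; rewrite (coord2 a1 a3 x d13) Da2.
  set s := det2 x a3 / det2 a1 a3; set t := det2 a1 x / det2 a1 a3.
  clearbody s t => hx0 hx.
  rewrite (Qx _ s t) // in hx.
  have := Nx _ s t erefl.
  have [t0|tn0] := eqVneq t 0.
    move: hx0 hx; rewrite t0 scale0r addr0 normr0 mul0r => hx0 hx.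
    have := Npos _ hx0; lra.
  have tp : 0 < `|t| by rewrite normr_gt0.
  move=> h; have := le_trans h hx; rewrite ler_pM2l //.
move=> w; rewrite /SD Da2 (coord2 a1 a3 w d13).
set s := det2 w a3 / det2 a1 a3; set t := det2 a1 w / det2 a1 a3.
rewrite (Qx _ s t) //.
have := D3low a1 a3 s t P1 P2; rewrite addrC => h.
have n2 : - t <= `|t| by rewrite -normrN ler_norm.
have h3 : `|t| * N a3 <= `|t| * (D a1 a3 + D a1 (- a3)) by rewrite ler_wpM2l ?normr_ge0.
have h4 : - t * N a3 <= `|t| * N a3 by rewrite ler_wpM2r ?Nge0.
move: h; rewrite addrC; lra.
Qed.


Definition mkv (x y : R) : V := \row_(j < 2) (if j == 0 then x else y).
Lemma mkv0 x y : mkv x y 0 0 = x. Proof. by rewrite mxE. Qed.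
Lemma mkv1 x y : mkv x y 0 1 = y. Proof. by rewrite mxE. Qed.

Definition Jv (u : V) := mkv (- u 0 1) (u 0 0).
Lemma dotJ u v : (@dotp R) (Jv u) v = det2 u v.
Proof. by rewrite /(@dotp R) /Jv mkv0 mkv1 /det2; ring. Qed.

Lemma dotpD c u v : (@dotp R) c (u + v) = (@dotp R) c u + (@dotp R) c v.
Proof. rewrite /(@dotp R) !mxE; ring. Qed.
Lemma dotpZ c k u : (@dotp R) c (k *: u) = k * (@dotp R) c u.
Proof. rewrite /(@dotp R) !mxE; ring. Qed.
Lemma dotpDl c d u : (@dotp R) (c - d) u = (@dotp R) c u - (@dotp R) d u.
Proof. rewrite /(@dotp R) !mxE; ring. Qed.
Lemma dotpN c u : (@dotp R) (- c) u = - (@dotp R) c u.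
Proof. rewrite /(@dotp R) !mxE; ring. Qed.
Lemma dotp0 u : (@dotp R) 0 u = 0.
Proof. rewrite /(@dotp R) !mxE; ring. Qed.

Lemma det_identity a1 a2 a3 :
  det2 a2 a3 *: a1 + det2 a3 a1 *: a2 + det2 a1 a2 *: a3 = 0.
Proof. apply: vec2P; rewrite !mxE /det2; ring. Qed.

Lemma par u v : det2 u v = 0 -> u != 0 -> exists c, v = c *: u.
Proof.
move=> hd hu.
have hn : u 0 0 ^+ 2 + u 0 1 ^+ 2 != 0.
  apply/negP => /eqP h.
  have h0 : u 0 0 = 0 by nra.
  have h1 : u 0 1 = 0 by nra.
  have hu0 : u = 0 by apply: vec2P; rewrite ?mxE.
  by move: hu; rewrite hu0 eqxx.
exists ((u 0 0 * v 0 0 + u 0 1 * v 0 1) / (u 0 0 ^+ 2 + u 0 1 ^+ 2)).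
move: hd; rewrite /det2 => hd.
apply: vec2P; rewrite !mxE.
  have key : v 0 0 * (u 0 0 ^+ 2 + u 0 1 ^+ 2) = (u 0 0 * v 0 0 + u 0 1 * v 0 1) * u 0 0.
    apply/eqP; rewrite -subr_eq0.
    have -> : v 0 0 * (u 0 0 ^+ 2 + u 0 1 ^+ 2) - (u 0 0 * v 0 0 + u 0 1 * v 0 1) * u 0 0
      = - (u 0 1 * (u 0 0 * v 0 1 - u 0 1 * v 0 0)) by ring.
    by rewrite hd mulr0 oppr0.
  by rewrite mulrAC -key mulfK.
have key : v 0 1 * (u 0 0 ^+ 2 + u 0 1 ^+ 2) = (u 0 0 * v 0 0 + u 0 1 * v 0 1) * u 0 1.
  apply/eqP; rewrite -subr_eq0.
  have -> : v 0 1 * (u 0 0 ^+ 2 + u 0 1 ^+ 2) - (u 0 0 * v 0 0 + u 0 1 * v 0 1) * u 0 1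
    = u 0 0 * (u 0 0 * v 0 1 - u 0 1 * v 0 0) by ring.
  by rewrite hd mulr0.
by rewrite mulrAC -key mulfK.
Qed.


Lemma NZle (k : R) x y : N (k *: x + y) <= `|k| * N x + N y.
Proof. by apply: le_trans (NT _ _) _; rewrite NZ. Qed.

Lemma notFT_cone b1 b2 b3 al be : 0 <= al -> 0 <= be -> b3 != 0 ->
  b3 = al *: b1 + be *: b2 -> ~ FT3 b1 b2 b3.
Proof.
move=> hal hbe n3 hb3 hft.
have hd : 0 < 1 + al + be by lra.
pose s := 1 / (1 + al + be).
have hs : 0 < s by rewrite /s divr_gt0.
have hsal : s * al <= 1 by rewrite /s mul1r mulrC ler_pdivrMr // mul1r; lra.
have hsbe : s * be <= 1 by rewrite /s mul1r mulrC ler_pdivrMr // mul1r; lra.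
have hs1 : s <= 1 by rewrite /s ler_pdivrMr // mul1r; lra.
have hx := hft (s *: b3).
have e1 : s *: b3 - b1 = (- (1 - s * al)) *: b1 + (s * be) *: b2.
  rewrite hb3; apply: vec2P; rewrite !mxE; ring.
have e2 : s *: b3 - b2 = (- (1 - s * be)) *: b2 + (s * al) *: b1.
  rewrite hb3; apply: vec2P; rewrite !mxE; ring.
have e3 : s *: b3 - b3 = (s - 1) *: b3.
  by rewrite scalerBl scale1r.
have N1 : N (s *: b3 - b1) <= (1 - s * al) * N b1 + s * be * N b2.
  rewrite e1; apply: le_trans (NZle _ _ _) _.
  rewrite normrN ger0_norm ?subr_ge0 // NZ ger0_norm //; apply: mulr_ge0 => //; exact: ltW.
have N2 : N (s *: b3 - b2) <= (1 - s * be) * N b2 + s * al * N b1.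
  rewrite e2; apply: le_trans (NZle _ _ _) _.
  rewrite normrN ger0_norm ?subr_ge0 // NZ ger0_norm //; apply: mulr_ge0 => //; exact: ltW.
have N3 : N (s *: b3 - b3) = (1 - s) * N b3.
  by rewrite e3 NZ ler0_norm ?subr_le0 // opprB.
have := Npos _ n3 => hn3.
have : 0 < s * N b3 by rewrite mulr_gt0.
lra.
Qed.

Lemma FT3_swap12 b1 b2 b3 : FT3 b1 b2 b3 -> FT3 b2 b1 b3.
Proof. by move=> h x; have := h x; lra. Qed.
Lemma FT3_rot b1 b2 b3 : FT3 b1 b2 b3 -> FT3 b2 b3 b1.
Proof. by move=> h x; have := h x; lra. Qed.


Lemma pointedI a1 a2 a3 (c : V) :
  0 < (@dotp R) c a1 -> 0 < (@dotp R) c a2 -> 0 < (@dotp R) c a3 ->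
  pointed 0 [:: a1; a2; a3].
Proof.
move=> p1 p2 p3; exists c; split.
  by apply/negP => /eqP c0; move: p1; rewrite c0 dotp0 ltxx.
move=> y; rewrite !inE => /or3P [] /eqP -> t /andP [t0 t1];
  rewrite !subr0 add0r dotpZ mulr_gt0 //.
Qed.

Lemma pointedE a1 a2 a3 : pointed 0 [:: a1; a2; a3] ->
  exists c : V, [/\ 0 < (@dotp R) c a1, 0 < (@dotp R) c a2 & 0 < (@dotp R) c a3].
Proof.
case=> c [_ h]; exists c.
have t0 : 0 < 1 / 2 :> R by rewrite divr_gt0.
have t1 : 1 / 2 < 1 :> R by rewrite ltr_pdivrMr // mul1r ltr1n.
have H y : y \in [:: a1; a2; a3] -> 0 < (@dotp R) c y.
  move=> hy; have := h y hy (1 / 2); rewrite t0 t1 /= => /(_ isT).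
  by rewrite !subr0 add0r dotpZ pmulr_rgt0.
by split; apply: H; rewrite !inE eqxx ?orbT.
Qed.

Lemma gordan_np a1 a2 a3 : ~ pointed 0 [:: a1; a2; a3] ->
  det2 a2 a3 != 0 -> det2 a3 a1 != 0 -> det2 a1 a2 != 0 ->
  exists l1, exists l2, exists l3,
    [/\ 0 < l1, 0 < l2, 0 < l3 & l1 *: a1 + l2 *: a2 + l3 *: a3 = 0].
Proof.
move=> np n1 n2 n3.
set d1 := det2 a2 a3; set d2 := det2 a3 a1; set d3 := det2 a1 a2.
have dA c : ~ [/\ 0 < (@dotp R) c a1, 0 < (@dotp R) c a2 & 0 < (@dotp R) c a3].
  by case=> q1 q2 q3; apply: np; apply: (@pointedI a1 a2 a3 c q1 q2 q3).
have E1 : (@dotp R) (Jv a2 - Jv a3) a1 = - d3 - d2 /\ (@dotp R) (Jv a2 - Jv a3) a2 = d1 /\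
          (@dotp R) (Jv a2 - Jv a3) a3 = d1.
  by rewrite !dotpDl !dotJ /d1 /d2 /d3 /det2; split; [|split]; ring.
have E2 : (@dotp R) (Jv a3 - Jv a1) a2 = - d1 - d3 /\ (@dotp R) (Jv a3 - Jv a1) a3 = d2 /\
          (@dotp R) (Jv a3 - Jv a1) a1 = d2.
  by rewrite !dotpDl !dotJ /d1 /d2 /d3 /det2; split; [|split]; ring.
have E3 : (@dotp R) (Jv a1 - Jv a2) a3 = - d2 - d1 /\ (@dotp R) (Jv a1 - Jv a2) a1 = d3 /\
          (@dotp R) (Jv a1 - Jv a2) a2 = d3.
  by rewrite !dotpDl !dotJ /d1 /d2 /d3 /det2; split; [|split]; ring.
have I1 : 0 < d1 -> 0 <= d2 + d3.
  move=> h; rewrite leNgt; apply/negP => h'; apply: (dA (Jv a2 - Jv a3)).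
  case: E1 => [-> [-> ->]]; split => //; lra.
have I1' : d1 < 0 -> d2 + d3 <= 0.
  move=> h; rewrite leNgt; apply/negP => h'; apply: (dA (- (Jv a2 - Jv a3))).
  rewrite !dotpN; case: E1 => [-> [-> ->]]; split; lra.
have I2 : 0 < d2 -> 0 <= d3 + d1.
  move=> h; rewrite leNgt; apply/negP => h'; apply: (dA (Jv a3 - Jv a1)).
  case: E2 => [-> [-> ->]]; split => //; lra.
have I2' : d2 < 0 -> d3 + d1 <= 0.
  move=> h; rewrite leNgt; apply/negP => h'; apply: (dA (- (Jv a3 - Jv a1))).
  rewrite !dotpN; case: E2 => [-> [-> ->]]; split; lra.
have I3 : 0 < d3 -> 0 <= d1 + d2.
  move=> h; rewrite leNgt; apply/negP => h'; apply: (dA (Jv a1 - Jv a2)).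
  case: E3 => [-> [-> ->]]; split => //; lra.
have I3' : d3 < 0 -> d1 + d2 <= 0.
  move=> h; rewrite leNgt; apply/negP => h'; apply: (dA (- (Jv a1 - Jv a2))).
  rewrite !dotpN; case: E3 => [-> [-> ->]]; split; lra.
have G := det_identity a1 a2 a3; rewrite -/d1 -/d2 -/d3 in G.
have [h1|h1|h1] := ltgtP d1 0; last by move: n1; rewrite -/d1 h1 eqxx.
- have [h2|h2|h2] := ltgtP d2 0; last by move: n2; rewrite -/d2 h2 eqxx.
  + have [h3|h3|h3] := ltgtP d3 0; last by move: n3; rewrite -/d3 h3 eqxx.
    * exists (- d1), (- d2), (- d3); split; rewrite ?oppr_gt0 //.
      by rewrite !scaleNr -!opprD G oppr0.
    * exfalso; have := I3 h3; have := I2' h2; have := I1' h1; lra.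
  + exfalso; have := I2 h2; have := I1' h1.
    have [h3|h3|h3] := ltgtP d3 0; last by move: n3; rewrite -/d3 h3 eqxx.
    * have := I3' h3; lra.
    * have := I3 h3; lra.
- have [h2|h2|h2] := ltgtP d2 0; last by move: n2; rewrite -/d2 h2 eqxx.
  + exfalso; have := I2' h2; have := I1 h1.
    have [h3|h3|h3] := ltgtP d3 0; last by move: n3; rewrite -/d3 h3 eqxx.
    * have := I3' h3; lra.
    * have := I3 h3; lra.
  + have [h3|h3|h3] := ltgtP d3 0; last by move: n3; rewrite -/d3 h3 eqxx.
    * exfalso; have := I3' h3; have := I2 h2; have := I1 h1; lra.
    * by exists d1, d2, d3; split.
Qed.


Arguments FT3_rot {b1 b2 b3}.
Arguments FT3_swap12 {b1 b2 b3}.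
Arguments notFT_cone {b1 b2 b3 al be}.

Lemma negdiv_ge0 (x y : R) : y != 0 -> x * y <= 0 -> 0 <= - (x / y).
Proof.
move=> hy hxy; have -> : x / y = (x * y) / (y * y) by field.
rewrite -mulNr divr_ge0 ?oppr_ge0 // -expr2 sqr_ge0 //.
Qed.

Arguments negdiv_ge0 {x y}.
Arguments gordan3 {b1 b2 b3 l1 l2 l3}.
Arguments par {u v}.

Lemma FT_notpointed a1 a2 a3 : a1 != 0 -> a2 != 0 -> a3 != 0 ->
  FT3 a1 a2 a3 -> ~ pointed 0 [:: a1; a2; a3].
Proof.
move=> n1 n2 n3 hft /pointedE [c [p1 p2 p3]].
set d1 := det2 a2 a3; set d2 := det2 a3 a1; set d3 := det2 a1 a2.
have G := det_identity a1 a2 a3; rewrite -/d1 -/d2 -/d3 in G.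
have Sd : d1 * (@dotp R) c a1 + d2 * (@dotp R) c a2 + d3 * (@dotp R) c a3 = 0.
  by rewrite -!dotpZ -!dotpD G /dotp !mxE; ring.
have ft231 := FT3_rot hft.
have ft312 := FT3_rot ft231.
have ft132 := FT3_swap12 ft312.
have K1 : d1 != 0 -> d2 * d1 <= 0 -> d3 * d1 <= 0 -> False.
  move=> h q2 q3; have G' : d2 *: a2 + d3 *: a3 + d1 *: a1 = 0 by rewrite -G [RHS]add3_rot.
  exact: (notFT_cone (negdiv_ge0 h q2) (negdiv_ge0 h q3) n1 (gordan3 h G') ft231).
have K2 : d2 != 0 -> d1 * d2 <= 0 -> d3 * d2 <= 0 -> False.
  move=> h q1 q3; have G' : d1 *: a1 + d3 *: a3 + d2 *: a2 = 0.
    by rewrite -G [RHS]add3_rot [RHS]add3_rot [RHS]add3_swap.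
  exact: (notFT_cone (negdiv_ge0 h q1) (negdiv_ge0 h q3) n2 (gordan3 h G') ft132).
have K3 : d3 != 0 -> d1 * d3 <= 0 -> d2 * d3 <= 0 -> False.
  move=> h q1 q2.
  exact: (notFT_cone (negdiv_ge0 h q1) (negdiv_ge0 h q2) n3 (gordan3 h G) hft).
have K0 : d3 = 0 -> False.
  move=> h; have [k hk] := par h n1.
  have hk0 : 0 < k.
    by move: p2; rewrite hk dotpZ pmulr_lgt0.
  apply: (@notFT_cone a1 a3 a2 k 0) => //; first exact: ltW.
    by rewrite scale0r addr0.
have [h1|h1|h1] := ltgtP d1 0; have [h2|h2|h2] := ltgtP d2 0;
  have [h3|h3|h3] := ltgtP d3 0;
  first [ exact: K0
        | (apply: K1; [by apply/eqP => e; move: h1; rewrite e ltxx | nra | nra])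
        | (apply: K2; [by apply/eqP => e; move: h2; rewrite e ltxx | nra | nra])
        | (apply: K3; [by apply/eqP => e; move: h3; rewrite e ltxx | nra | nra])
        | nra ].
Qed.


Arguments FT3_SD {b1 b2 b3}.
Arguments caseA {a1 a2 a3 c}.
Arguments caseB {a1 a2 a3 l1 l2 l3}.
Arguments gordan_np {a1 a2 a3}.

Lemma FTpt_FT3 b1 b2 b3 : FT_point N 0 [:: b1; b2; b3] <-> FT3 b1 b2 b3.
Proof.
rewrite /FT_point /FT3; split => h x; have := h x;
  rewrite !big_cons !big_nil !sub0r !NN !addr0 !addrA //.
Qed.

Lemma crit_le1 b1 b2 y : FT3 b1 b2 y -> y != 0 -> le1 b1 b2 /\ ge1 b1 b2.
Proof.
move=> hft hy; have S := FT3_SD hft; split.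
  move=> w; have := S w; rewrite /SD; case: (D_bounds y w); lra.
exists (- y); first by rewrite oppr_eq0.
have := S (- y); rewrite /SD D_selfN NN; lra.
Qed.

Arguments crit_le1 {b1 b2 y}.

Lemma pos_par b1 b2 c : le1 b1 b2 -> b1 != 0 -> b2 = c *: b1 -> 0 < c -> False.
Proof.
move=> h n1 e hc; rewrite e in h; have := h (- b1); rewrite D_scalea // D_selfN NN.
have := Npos _ n1; lra.
Qed.

Arguments pos_par {b1 b2 c}.

Lemma par_neg u v : le1 u v -> u != 0 -> v != 0 -> det2 u v = 0 ->
  exists2 c, c < 0 & v = c *: u.
Proof.
move=> h nu nv hd; have [c hc] := par hd nu; exists c => //.
have [cn|cp|c0] := ltgtP c 0 => //.
  by exfalso; apply: (pos_par h nu hc cp).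
by move: nv; rewrite hc c0 scale0r eqxx.
Qed.

Arguments par_neg {u v}.
Arguments le1C {b1 b2}.
Arguments ge1C {b1 b2}.

Lemma back a1 a2 a3 y1 y2 y3 : a1 != 0 -> a2 != 0 -> a3 != 0 ->
  ~ pointed 0 [:: a1; a2; a3] ->
  y1 != 0 -> y2 != 0 -> y3 != 0 ->
  FT3 a1 a2 y3 -> FT3 a1 a3 y2 -> FT3 a2 a3 y1 -> FT3 a1 a2 a3.
Proof.
move=> n1 n2 n3 np m1 m2 m3 f3 f2 f1.
have [e12 g12] := crit_le1 f3 m3.
have [e13 g13] := crit_le1 f2 m2.
have [e23 g23] := crit_le1 f1 m1.
have e21 := le1C e12; have e31 := le1C e13; have e32 := le1C e23.
have g21 := ge1C g12; have g31 := ge1C g13; have g32 := ge1C g23.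
apply: SD_FT3.
have [d12|d12] := eqVneq (det2 a1 a2) 0.
  have [c hc ha2] := par_neg e12 n1 n2 d12.
  have [d13|d13] := eqVneq (det2 a1 a3) 0.
    exfalso; have [c' hc' ha3] := par_neg e13 n1 n3 d13.
    apply: (@pos_par a2 a3 (c' / c) e23 n2).
      by rewrite ha3 ha2 scalerA mulfVK // ltr0_neq0.
    by rewrite -mulrNN -invrN divr_gt0 // oppr_gt0.
  exact: (caseA hc ha2 d13 n1 n3 e13 e23 g12).
have [d13|d13] := eqVneq (det2 a1 a3) 0.
  have [c hc ha3] := par_neg e13 n1 n3 d13.
  move=> w; have := caseA hc ha3 d12 n1 n2 e12 e32 g13 w.
  by rewrite /SD; lra.
have [d23|d23] := eqVneq (det2 a2 a3) 0.
  have [c hc ha3] := par_neg e23 n2 n3 d23.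
  have d21 : det2 a2 a1 != 0 by rewrite det2C oppr_eq0.
  move=> w; have := caseA hc ha3 d21 n2 n1 e21 e31 g23 w.
  by rewrite /SD; lra.
have d31 : det2 a3 a1 != 0 by rewrite det2C oppr_eq0.
have [l1 [l2 [l3 [hl1 hl2 hl3 G]]]] := gordan_np np d23 d31 d12.
exact: (caseB hl1 hl2 hl3 G d12 d23 d13 n1 n2 n3 e12 e13 e23 g12 g13 g23).
Qed.


Arguments FT_notpointed {a1 a2 a3}.
Arguments back {a1 a2 a3 y1 y2 y3}.

Lemma main a1 a2 a3 : a1 != 0 -> a2 != 0 -> a3 != 0 ->
  floating_FT_config N 0 [:: a1; a2; a3] <->
  (~ pointed 0 [:: a1; a2; a3] /\
   forall i j : 'I_3, i != j ->
     critical N (nth 0 [:: a1; a2; a3] i) 0 (nth 0 [:: a1; a2; a3] j)).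
Proof.
move=> h1 h2 h3; split.
- case=> _ /FTpt_FT3 F; split; first exact: FT_notpointed.
  have F213 := FT3_swap12 F; have F231 := FT3_rot F; have F312 := FT3_rot F231.
  have F132 := FT3_swap12 F312; have F321 := FT3_swap12 F231.
  move=> i j; case: i => [[|[|[|//]]]] hi; case: j => [[|[|[|//]]]] hj //= hij.
  + by exists a3; split => //; apply/FTpt_FT3.
  + by exists a2; split => //; apply/FTpt_FT3.
  + by exists a3; split => //; apply/FTpt_FT3.
  + by exists a1; split => //; apply/FTpt_FT3.
  + by exists a2; split => //; apply/FTpt_FT3.
  + by exists a1; split => //; apply/FTpt_FT3.
- case=> np hc.
  have [y3 [m3 /FTpt_FT3 f3]] := hc (@Ordinal 3 0 isT) (@Ordinal 3 1 isT) isT.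
  have [y2 [m2 /FTpt_FT3 f2]] := hc (@Ordinal 3 0 isT) (@Ordinal 3 2 isT) isT.
  have [y1 [m1 /FTpt_FT3 f1]] := hc (@Ordinal 3 1 isT) (@Ordinal 3 2 isT) isT.
  split; first by move=> y; rewrite !inE => /or3P [] /eqP ->.
  by apply/FTpt_FT3; apply: (back h1 h2 h3 np m1 m2 m3 f3 f2 f1).
Qed.

End Basics.

Theorem theorem5p5 (R : realType) (N : 'rV[R]_2 -> R) (hN : is_norm N)
    (a1 a2 a3 : 'rV[R]_2) (h1 : a1 != 0) (h2 : a2 != 0) (h3 : a3 != 0) :
  floating_FT_config N 0 [:: a1; a2; a3] <->
  (~ pointed 0 [:: a1; a2; a3] /\
   forall i j : 'I_3, i != j ->
     critical N (nth 0 [:: a1; a2; a3] i) 0 (nth 0 [:: a1; a2; a3] j)).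
Proof. exact: (@main R N hN a1 a2 a3 h1 h2 h3). Qed.
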